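(* Let $G$ be a finite loopless graph with no clique on $D+1$ vertices and with maximum degree $\Delta(G)\leq D$. Let $c\ge 1$ be an integer and let $D=\sum_{i=1}^{c+1}\alpha_i$, where $\alpha_1,\dots,\alpha_{c+1}\geq 2$ are integers. Let $\Xi$ be the set of all (not necessarily proper) colorings $\psi:V(G)\to\{1,\dots,c+1\}$, and for $\psi\in\Xi$ let $\Phi(\psi)=\sum_{i=1}^{c+1}\frac{f_i(\psi)}{\alpha_i}$, where $f_i(\psi)$ is the number of edges of $G$ both of whose endpoints have color $i$ under $\psi$. Then there exists a coloring $\xi\in\Xi$ such that: (1) $\Phi(\xi)=\min_{\psi\in\Xi}\Phi(\psi)$; and (2) for every $1\leq i\leq c+1$, there is no clique in $G$ on $\alpha_i+1$ vertices all of which have color $i$ under $\xi$. *)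

(* Defs.v *)
From mathcomp Require Import all_boot all_order all_algebra.
Set Implicit Arguments. Unset Strict Implicit. Unset Printing Implicit Defensive.
Import Order.TTheory GRing.Theory Num.Theory.

(* A finite loopless (multi)graph on vertex set T: m x y = number of edges
   joining x and y; symmetric and m x x = 0. *)
Definition loopless_graph (T : finType) (m : T -> T -> nat) : Prop :=
  (forall x y, m x y = m y x) /\ (forall x, m x x = 0%N).

Definition degree (T : finType) (m : T -> T -> nat) (x : T) : nat :=
  (\sum_(y : T) m x y)%N.

Definition adjacent (T : finType) (m : T -> T -> nat) (x y : T) : bool :=
  (0 < m x y)%N.

Definition is_clique (T : finType) (m : T -> T -> nat) (K : {set T}) : Prop :=
  forall x y, x \in K -> y \in K -> x != y -> adjacent m x y.

(* number of edges both of whose endpoints have colour i under psi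
   (ordered pairs counted, then halved; exact since m is symmetric, loopless) *)
Definition mono_edges (T : finType) (k : nat) (m : T -> T -> nat)
    (psi : T -> 'I_k) (i : 'I_k) : nat :=
  ((\sum_(x : T) \sum_(y : T) (((psi x == i) && (psi y == i)) * m x y))./2)%N.

Definition Phi (T : finType) (k : nat) (m : T -> T -> nat)
    (alpha : 'I_k -> nat) (psi : T -> 'I_k) : rat :=
  (\sum_(i < k) (mono_edges m psi i)%:R / (alpha i)%:R)%R.

(* Main.v *)
Require Import Defs.
From mathcomp Require Import all_boot all_order all_algebra.
From mathcomp Require Import zify ring lra.
Import Order.TTheory GRing.Theory Num.Theory.
Set Implicit Arguments. Unset Strict Implicit. Unset Printing Implicit Defensive.
Local Open Scope ring_scope.

Ltac nlia :=
  repeat match goal with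
  | H : is_true (_ <= _)%N |- _ => revert H
  | H : (_ = _ :> nat) |- _ => revert H
  | H : is_true (_ != _ :> nat) |- _ => revert H
  | H : is_true (_ == _ :> nat) |- _ => revert H
  end;
  repeat match goal with H : _ |- _ => clear H end;
  intros; lia.

Section Main.
Variables (T : finType) (m : T -> T -> nat) (c : nat) (alpha : 'I_c.+1 -> nat).
Hypothesis msym : forall x y, m x y = m y x.
Hypothesis mloop : forall x, m x x = 0%N.
Hypothesis halpha : forall i, (2 <= alpha i)%N.
Variable D : nat.
Hypothesis hdeg : forall x, (degree m x <= D)%N.
Hypothesis hD : D = (\sum_(i < c.+1) alpha i)%N.

Local Notation col := 'I_c.+1.
Local Notation coloring := {ffun T -> col}.

Definition adj x y := adjacent m x y.
Lemma adjC x y : adj x y = adj y x.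
Proof. by rewrite /adj /adjacent msym. Qed.
Lemma adjxx x : adj x x = false.
Proof. by rewrite /adj /adjacent mloop. Qed.

Definition upd (f : coloring) v j : coloring := [ffun y => if y == v then j else f y].
Lemma updE f v j y : upd f v j y = if y == v then j else f y.
Proof. by rewrite ffunE. Qed.
Lemma upd_v f v j : upd f v j v = j.
Proof. by rewrite updE eqxx. Qed.
Lemma upd_o f v j y : y != v -> upd f v j y = f y.
Proof. by rewrite updE => /negbTE ->. Qed.

Definition dg (f : coloring) v k := (\sum_y (f y == k) * m v y)%N.
Definition S2 (f : coloring) k := (\sum_x \sum_y ((f x == k) && (f y == k)) * m x y)%N.
Definition P2 (f : coloring) : rat := (\sum_(k < c.+1) (S2 f k)%:R / (alpha k)%:R)%R.

Lemma sum_sym_even (g : T -> T -> nat) : (forall x y, g x y = g y x) -> (forall x, g x x = 0%N) ->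
  (\sum_x \sum_y g x y = (\sum_x \sum_y (enum_rank y < enum_rank x) * g x y).*2)%N.
Proof.
move=> gs g0.
have sp : forall x y, g x y = ((enum_rank y < enum_rank x) * g x y + (enum_rank x < enum_rank y) * g x y)%N.
  move=> x y; case: (ltngtP (enum_rank y) (enum_rank x)) => h /=; rewrite ?mul1n ?mul0n ?addn0 //.
  by move/val_inj/enum_rank_inj: h => ->; rewrite g0.
rewrite -addnn.
transitivity (\sum_x \sum_y (((enum_rank y < enum_rank x) * g x y) + ((enum_rank x < enum_rank y) * g x y)))%N.
  by apply eq_bigr => x _; apply eq_bigr => y _; rewrite -sp.
rewrite (eq_bigr (fun x => \sum_y ((enum_rank y < enum_rank x) * g x y) + \sum_y ((enum_rank x < enum_rank y) * g x y))%N); last first.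
  by move=> x _; rewrite big_split.
rewrite big_split /=; congr (_ + _)%N.
rewrite exchange_big /=; apply eq_bigr => x _; apply eq_bigr => y _.
by rewrite gs.
Qed.


Lemma S2_even f k : S2 f k = ((S2 f k)./2).*2.
Proof.
rewrite /S2 (sum_sym_even (g := fun x y => (((f x == k) && (f y == k)) * m x y)%N)) ?half_double //.
  by move=> x y; rewrite andbC msym.
by move=> x; rewrite mloop muln0.
Qed.

Lemma Phi_P2 (f : coloring) : Phi m alpha f = (P2 f / 2)%R.
Proof.
rewrite /Phi /P2 mulr_suml; apply eq_bigr => k _.
rewrite /mono_edges -/(S2 f k).
rewrite [in RHS](S2_even f k) -muln2 natrM.
have : ((alpha k)%:R != 0 :> rat) by rewrite pnatr_eq0 -lt0n; have := halpha k; lia.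
move=> h; field. by rewrite h.
Qed.

Lemma Phi_ext (f g : T -> col) : f =1 g -> Phi m alpha f = Phi m alpha g.
Proof.
move=> fg; rewrite /Phi; apply eq_bigr => k _; rewrite /mono_edges.
congr ((_ ./2)%:R / _)%R; apply eq_bigr => x _; apply eq_bigr => y _.
by rewrite !fg.
Qed.

Definition S2' (f : coloring) v k := (\sum_(x | x != v) \sum_(y | y != v) ((f x == k) && (f y == k)) * m x y)%N.

Lemma S2_split f v k : S2 f k = (S2' f v k + ((f v == k) * dg f v k).*2)%N.
Proof.
rewrite /S2 (bigD1 v) //=.
have e1 : (\sum_y ((f v == k) && (f y == k)) * m v y = (f v == k) * dg f v k)%N.
  rewrite /dg big_distrr /=; apply eq_bigr => y _.
  by case: (f v == k); rewrite ?mul1n ?mul0n.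
have e2 : (\sum_(x | x != v) \sum_y ((f x == k) && (f y == k)) * m x y =
   \sum_(x | x != v) ((f x == k) && (f v == k)) * m x v + S2' f v k)%N.
  rewrite /S2' -big_split /=; apply eq_bigr => x _; by rewrite (bigD1 v).
have e3 : (\sum_(x | x != v) ((f x == k) && (f v == k)) * m x v = (f v == k) * dg f v k)%N.
  rewrite /dg [in RHS](bigD1 v) //= mloop muln0 add0n big_distrr /=; apply eq_bigr => x _.
  by rewrite msym; case: (f v == k); rewrite ?andbT ?andbF ?mul1n ?mul0n.
rewrite e1 e2 e3 -addnn; lia.
Qed.

Lemma S2'_upd f v j k : S2' (upd f v j) v k = S2' f v k.
Proof.
apply eq_bigr => x hx; apply eq_bigr => y hy; by rewrite !upd_o.
Qed.

Lemma dg_upd f v j k : dg (upd f v j) v k = dg f v k.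
Proof.
apply eq_bigr => y _; case: (eqVneq y v) => [->|hne]; first by rewrite mloop !muln0.
by rewrite upd_o.
Qed.

Lemma sum_pick (j : col) (e : col -> nat) :
  (\sum_(k < c.+1) ((j == k) * e k)%:R / (alpha k)%:R = (e j)%:R / (alpha j)%:R :> rat)%R.
Proof.
rewrite (bigD1 j) //= eqxx mul1n big1 ?addr0 // => k hk.
by rewrite eq_sym (negbTE hk) mul0n mul0r.
Qed.

Lemma P2_upd f v j : P2 (upd f v j) = (P2 f + 2 * ((dg f v j)%:R / (alpha j)%:R)
   - 2 * ((dg f v (f v))%:R / (alpha (f v))%:R))%R.
Proof.
have h k : ((S2 (upd f v j) k)%:R / (alpha k)%:R = (S2 f k)%:R / (alpha k)%:R
   + 2 * (((j == k) * dg f v k)%:R / (alpha k)%:R) - 2 * (((f v == k) * dg f v k)%:R / (alpha k)%:R) :> rat)%R.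
  have := S2_split (upd f v j) v k; rewrite S2'_upd dg_upd upd_v => e1.
  have := S2_split f v k => e2.
  rewrite e1 e2 -!muln2 !natrD !(natrM _ _ 2).
  ring.
rewrite /P2 (eq_bigr _ (fun k _ => h k)) sumrB big_split /= -!mulr_sumr !sum_pick.
by [].
Qed.

Definition Fmin (f : coloring) := forall g, (P2 f <= P2 g)%R.

Lemma apos k : (0 < alpha k)%N.
Proof. have := halpha k; lia. Qed.

Lemma cross f v k : Fmin f -> (dg f v (f v) * alpha k <= dg f v k * alpha (f v))%N.
Proof.
move=> hf; have := hf (upd f v k); rewrite P2_upd => h.
have h2 : ((dg f v (f v))%:R / (alpha (f v))%:R <= (dg f v k)%:R / (alpha k)%:R :> rat)%R by lra.
move: h2; rewrite ler_pdivrMr ?ltr0n ?apos // mulrAC ler_pdivlMr ?ltr0n ?apos //.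
by rewrite -!natrM ler_nat.
Qed.

Lemma sum_dg f v : (\sum_k dg f v k)%N = degree m v.
Proof.
rewrite /dg exchange_big /degree; apply eq_bigr => y _.
rewrite -big_distrl /= (bigD1 (f y)) //= eqxx big1 ?addn0 ?mul1n // => k hk.
by rewrite eq_sym (negbTE hk).
Qed.

Lemma sumS : (\sum_(k < c.+1) (alpha k).+1 = \sum_(k < c.+1) alpha k + c.+1)%N.
Proof.
rewrite (eq_bigr (fun k => alpha k + 1)%N); last by move=> k _; rewrite addn1.
by rewrite big_split /= sum_nat_const card_ord muln1.
Qed.

Lemma lovasz f v : Fmin f -> (dg f v (f v) <= alpha (f v))%N.
Proof.
move=> hf; rewrite leqNgt; apply/negP => hlt.
have hk : forall k, (alpha k < dg f v k)%N.
  move=> k; have := cross v k hf; have := apos k; have := apos (f v); nia.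
have : (\sum_(k < c.+1) (alpha k).+1 <= \sum_k dg f v k)%N by apply leq_sum => k _; apply hk.
rewrite sum_dg sumS; have := hdeg v; lia.
Qed.

Lemma lovasz_eq f v : Fmin f -> dg f v (f v) = alpha (f v) -> forall k, dg f v k = alpha k.
Proof.
move=> hf he.
have hk : forall k, (alpha k <= dg f v k)%N.
  move=> k; have := cross v k hf; rewrite he; have := apos (f v); nia.
have hs : (\sum_k dg f v k = \sum_k alpha k + \sum_k (dg f v k - alpha k))%N.
  rewrite -big_split; apply eq_bigr => k _ /=; have := hk k; lia.
have h0 : (\sum_k (dg f v k - alpha k) == 0)%N.
  rewrite sum_dg in hs; apply/eqP; have := hdeg v; rewrite hD hs; set a := (\sum_(i < c.+1) alpha i)%N; lia.
move: h0; rewrite sum_nat_eq0 => /forallP h0 k.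
have := h0 k; have := hk k; lia.
Qed.


Definition Nb (f : coloring) v k : {set T} := [set y | (f y == k) && adj v y].

Lemma card_set_sum (P : pred T) : #|[set y | P y]| = (\sum_y P y)%N.
Proof.
rewrite -sum1_card big_mkcond /=; apply eq_bigr => y _; rewrite inE; by case: (P y).
Qed.

Lemma card_Nb f v k : (#|Nb f v k| <= dg f v k)%N.
Proof.
rewrite /Nb card_set_sum /dg; apply leq_sum => y _.
case: (f y == k) => //=; rewrite /adj /adjacent mul1n; by case: (m v y).
Qed.

Lemma Nb_upd f v j k : Nb (upd f v j) v k = Nb f v k.
Proof.
apply/setP => y; rewrite !inE; case: (eqVneq y v) => [->|hne]; first by rewrite !adjxx !andbF.
by rewrite upd_o.
Qed.

Definition clq (K : {set T}) := [forall x in K, forall y in K, (x != y) ==> adj x y].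

Lemma clqE K x y : clq K -> x \in K -> y \in K -> x != y -> adj x y.
Proof.
move=> /forallP h hx hy hxy; move: (h x); rewrite hx /= => /forallP /(_ y).
by rewrite hy hxy.
Qed.

Lemma clqP K : reflect (is_clique m K) (clq K).
Proof.
apply: (iffP idP) => [h x y hx hy hxy|h].
  exact: (clqE h hx hy hxy).
apply/forallP => x; apply/implyP => hx; apply/forallP => y; apply/implyP => hy; apply/implyP => hxy.
exact: h.
Qed.

Definition bad (f : coloring) k K := [/\ clq K, #|K| = (alpha k).+1 & forall x, x \in K -> f x = k].

Definition badb (f : coloring) (K : {set T}) :=
  [exists k : col, [&& #|K| == (alpha k).+1, clq K & [forall x in K, f x == k]]].

Lemma badbP f K : reflect (exists k, bad f k K) (badb f K).
Proof.
apply: (iffP existsP) => [[k /and3P [/eqP h1 h2 /forallP h3]]|[k [h1 h2 h3]]].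
  exists k; split => // x hx; have := h3 x; rewrite hx /=; by move/eqP.
exists k; apply/and3P; split => //; first by rewrite h2.
apply/forallP => x; apply/implyP => hx; by rewrite h3.
Qed.

Definition B (f : coloring) := #|[set K | badb f K]|.

Definition state (f : coloring) := Fmin f /\ forall g, Fmin g -> (B f <= B g)%N.

Lemma L2 f k S w : Fmin f -> bad f k S -> w \in S -> Nb f w k = S :\ w.
Proof.
move=> hf [hc hcard hcol] hw.
have sub : S :\ w \subset Nb f w k.
  apply/subsetP => y; rewrite !inE => /andP [hyw hyS].
  rewrite (hcol y hyS) eqxx /=; apply: clqE hc hw hyS _; by rewrite eq_sym.
have c1 : #|S :\ w| = alpha k by move: hcard; rewrite (cardsD1 w) hw; lia.
have c2 := card_Nb f w k.
have c3 := lovasz w hf; rewrite (hcol w hw) in c3.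
apply/eqP; rewrite eq_sym eqEcard sub /=; lia.
Qed.

Lemma tight f i K v : Fmin f -> bad f i K -> v \in K -> forall k, dg f v k = alpha k.
Proof.
move=> hf hb hv; have [hc hcard hcol] := hb.
have e := L2 hf hb hv.
have c1 : #|K :\ v| = alpha i by move: hcard; rewrite (cardsD1 v) hv; lia.
have c2 := card_Nb f v i.
have c3 := lovasz v hf; rewrite (hcol v hv) in c3.
apply: lovasz_eq => //; rewrite (hcol v hv); move: c2; rewrite e; lia.
Qed.

Lemma P2_tight f i K v j : Fmin f -> bad f i K -> v \in K -> P2 (upd f v j) = P2 f.
Proof.
move=> hf hb hv; rewrite P2_upd !(tight hf hb hv).
have h k : ((alpha k)%:R / (alpha k)%:R = 1 :> rat).
  by apply: divff; rewrite pnatr_eq0 -lt0n apos.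
rewrite !h; ring.
Qed.

Lemma bad_in f k S v : bad f k S -> v \in S -> f v = k.
Proof. by case=> _ _ h /h. Qed.

Lemma bad_unique f k S v : Fmin f -> bad f k S -> v \in S -> S = v |: Nb f v k.
Proof. by move=> hf hb hv; rewrite (L2 hf hb hv) setD1K. Qed.

Lemma L1 f i K v j : state f -> bad f i K -> v \in K -> j != i ->
  state (upd f v j) /\ exists S, bad (upd f v j) j S /\ v \in S.
Proof.
move=> [hf hmin] hb hv hji.
set g := upd f v j.
have eP : P2 g = P2 f by apply: P2_tight hf hb hv.
have Fg : Fmin g by move=> h; rewrite eP; apply hf.
have hB1 := hmin g Fg.
have Kin : K \in [set K | badb f K] by rewrite inE; apply/badbP; exists i.
have cK : #|[set K | badb f K] :\ K| = (B f).-1 by rewrite /B [X in _ = X.-1](cardsD1 K) Kin.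
have hBpos : (0 < B f)%N by rewrite /B (cardsD1 K) Kin.
have incl : forall S, badb g S -> v \notin S -> S \in [set K | badb f K] :\ K.
  move=> S /badbP [k [hc hcard hcol]] hvS; rewrite !inE; apply/andP; split.
    by apply/negP => /eqP hSK; move: hvS; rewrite hSK hv.
  apply/badbP; exists k; split => // x hx; rewrite -(hcol x hx) upd_o //.
  by apply/negP => /eqP hxv; move: hvS; rewrite -hxv hx.
case: (boolP (badb g (v |: Nb g v j))) => hbad.
  have [k hk] := badbP _ _ hbad.
  have hkj : k = j by rewrite -(bad_in hk (setU11 _ _)) upd_v.
  rewrite hkj in hk.
  split; last by exists (v |: Nb g v j); split => //; apply: setU11.
  split => // h Fh.
  have sub : [set K | badb g K] \subset ([set K | badb f K] :\ K) :|: [set v |: Nb g v j].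
    apply/subsetP => S; rewrite inE => hS; rewrite inE.
    case: (boolP (v \in S)) => hvS.
      have [k' hk'] := badbP _ _ hS.
      have hk'j : k' = j by rewrite -(bad_in hk' hvS) upd_v.
      rewrite hk'j in hk'.
      by rewrite inE (bad_unique Fg hk' hvS) eqxx orbT.
    by rewrite incl.
  have := subset_leq_card sub; have := leq_card_setU ([set K | badb f K] :\ K) [set v |: Nb g v j].
  rewrite cards1 cK => [[h1 _]] h2.
  have := hmin h Fh; move: h1 h2 hBpos; rewrite /B; lia.
exfalso.
have sub : [set K | badb g K] \subset ([set K | badb f K] :\ K).
  apply/subsetP => S; rewrite inE => hS.
  case: (boolP (v \in S)) => hvS; last by rewrite incl.
  have [k' hk'] := badbP _ _ hS.
  have hk'j : k' = j by rewrite -(bad_in hk' hvS) upd_v.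
  rewrite hk'j in hk'.
  by move: hbad; rewrite -(bad_unique Fg hk' hvS) hS.
have := subset_leq_card sub; rewrite cK; move: hB1 hBpos; rewrite /B; lia.
Qed.


Lemma in_Nb f v k y : (y \in Nb f v k) = (f y == k) && adj v y.
Proof. by rewrite inE. Qed.

Lemma neq_col (f : coloring) (x y : T) : f x != f y -> x != y.
Proof. by apply: contraNneq => ->. Qed.

Lemma D1 f i K j y z w : state f -> bad f i K -> j != i -> y \in K -> f z = j -> adj y z ->
  w \in K -> w != y -> adj z w -> forall w', w' \in K -> w' != y -> adj z w'.
Proof.
move=> st hb hji hy hz ayz hw hwy azw w' hw' hw'y.
have [hc hcard hcol] := hb.
have [st1 [S [bS yS]]] := L1 st hb hy hji.
set f1 := upd f y j in st1 bS.
have zy : z != y by apply: (@neq_col f); rewrite hz (hcol y hy).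
have zS : z \in S.
  have := L2 st1.1 bS yS; rewrite /f1 => e.
  have : z \in Nb (upd f y j) y j by rewrite in_Nb upd_o // hz eqxx ayz.
  by rewrite e => /setD1P [].
have hij : i != j by rewrite eq_sym.
have [st2 [U [bU zU]]] := L1 st1 bS zS hij.
set f2 := upd f1 z i in st2 bU.
have f2K : forall u, u \in K -> u != y -> f2 u = i.
  move=> u hu huy; rewrite /f2 upd_o; last by apply: (@neq_col f); rewrite hz (hcol u hu) eq_sym.
  by rewrite /f1 upd_o // hcol.
have wU : w \in U.
  have := L2 st2.1 bU zU => e.
  have : w \in Nb f2 z i by rewrite in_Nb f2K // eqxx azw.
  by rewrite e => /setD1P [].
have [hcU _ _] := bU.
case: (eqVneq w' w) => [->//|hw'w].
have w'U : w' \in U.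
  have := L2 st2.1 bU wU => e.
  have : w' \in Nb f2 w i by rewrite in_Nb f2K // eqxx /=; apply: clqE hc hw hw' _; rewrite eq_sym.
  by rewrite e => /setD1P [].
apply: clqE hcU zU w'U _.
by apply: (@neq_col f); rewrite hz (hcol w' hw') hji.
Qed.


Lemma inS f i K j y S z : state f -> bad f i K -> y \in K -> j != i ->
  bad (upd f y j) j S -> y \in S -> f z = j -> adj y z -> z \in S.
Proof.
move=> st hb hy hji bS yS hz ayz.
have zy : z != y by apply: (@neq_col f); rewrite hz (bad_in hb hy).
have hf1 : Fmin (upd f y j) by have [st1 _] := L1 st hb hy hji; exact: st1.1.
have e := L2 hf1 bS yS.
have : z \in Nb (upd f y j) y j by rewrite in_Nb upd_o // hz eqxx ayz.
by rewrite e => /setD1P [].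
Qed.

Lemma D2 f i K j y z1 z2 : state f -> bad f i K -> j != i -> y \in K ->
  f z1 = j -> adj y z1 -> (forall w, w \in K -> w != y -> adj z1 w) ->
  f z2 = j -> adj y z2 -> forall w, w \in K -> w != y -> adj z2 w.
Proof.
move=> st hb hji hy hz1 a1 c1 hz2 a2 w hw hwy.
have [st1 [S [bS yS]]] := L1 st hb hy hji.
have z1S := inS st hb hy hji bS yS hz1 a1.
have z2S := inS st hb hy hji bS yS hz2 a2.
have [hc _ hcol] := hb.
have hij : i != j by rewrite eq_sym.
have fw : upd f y j w = i by rewrite upd_o // hcol.
have ayw : adj y w by apply: clqE hc hy hw _; rewrite eq_sym.
have z1y : z1 != y by apply: (@neq_col f); rewrite hz1 (hcol y hy).
have z2y : z2 != y by apply: (@neq_col f); rewrite hz2 (hcol y hy).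
have := D1 st1 bS hij yS fw ayw z1S z1y _ z2S z2y.
move=> h; rewrite adjC; apply: h; rewrite adjC; exact: c1.
Qed.

Definition antiv (f : coloring) (K : {set T}) j y :=
  [forall z, forall w, [&& f z == j, adj y z, w \in K & w != y] ==> ~~ adj z w].
Definition anti (f : coloring) (K : {set T}) j := forall y, y \in K -> antiv f K j y.
Definition compl (f : coloring) (K : {set T}) j := forall y z w, y \in K -> f z = j -> adj y z -> w \in K -> w != y -> adj z w.

Lemma antivE (f : coloring) (K : {set T}) j y z w : antiv f K j y -> f z = j -> adj y z -> w \in K -> w != y -> ~~ adj z w.
Proof.
move=> /forallP /(_ z) /forallP /(_ w) /implyP h hz a hw hwy; apply: h.
by rewrite hz eqxx a hw hwy.
Qed.

Lemma antiE (f : coloring) (K : {set T}) j y z w : anti f K j -> y \in K -> f z = j -> adj y z -> w \in K -> w != y -> ~~ adj z w.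
Proof. move=> h hy; exact: antivE (h y hy). Qed.

Lemma antivP (f : coloring) (K : {set T}) (j : col) (y : T) : reflect (forall z w, f z = j -> adj y z -> w \in K -> w != y -> ~~ adj z w) (antiv f K j y).
Proof.
apply: (iffP idP) => [h z w|h]; first exact: antivE.
apply/forallP => z; apply/forallP => w; apply/implyP => /and4P [/eqP hz a hw hwy]; exact: h.
Qed.

Lemma D3 f i K j y : state f -> bad f i K -> j != i -> y \in K -> antiv f K j y -> anti f K j.
Proof.
move=> st hb hji hy hav y' hy'; apply/antivP => z w hz ay'z hw hwy'.
apply/negP => azw.
have cz := D1 st hb hji hy' hz ay'z hw hwy' azw.
case: (eqVneq y' y) => [eyy|ne].
  rewrite eyy in ay'z hwy'; have := antivE hav hz ay'z hw hwy'; by rewrite azw.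
have azy : adj z y by apply: cz => //; rewrite eq_sym.
have ayz : adj y z by rewrite adjC.
have := antivE hav hz ayz hy' ne; by rewrite adjC ay'z.
Qed.

Lemma Dich f i K j : state f -> bad f i K -> j != i -> anti f K j \/ compl f K j.
Proof.
move=> st hb hji.
case: (boolP [forall y in K, antiv f K j y]) => h.
  left => y hy; by move: h => /forallP /(_ y); rewrite hy.
right => y z w hy hz ayz hw hwy.
have nav : ~~ antiv f K j y.
  apply/negP => hav; move: h; apply/negP/negPn/forallP => y'; apply/implyP => hy'.
  exact: (D3 st hb hji hy hav).
have [z0 [w0 [hz0 a0 hw0 hw0y a0w]]] : exists z0 w0, [/\ f z0 = j, adj y z0, w0 \in K, w0 != y & adj z0 w0].
  move: nav; rewrite negb_forall => /existsP [z0]; rewrite negb_forall => /existsP [w0].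
  rewrite negb_imply negbK => /andP [/and4P [/eqP h1 h2 h3 h4] h5].
  by exists z0, w0.
have c0 := D1 st hb hji hy hz0 a0 hw0 hw0y a0w.
exact: (D2 st hb hji hy hz0 a0 c0 hz ayz hw hwy).
Qed.


Lemma Nb_card f i K v k : state f -> bad f i K -> v \in K -> #|Nb f v k| = alpha k.
Proof.
move=> st hb hv.
case: (eqVneq k i) => [->|hki].
  rewrite (L2 st.1 hb hv); have [_ hcard _] := hb; move: hcard; rewrite (cardsD1 v) hv; lia.
have [st1 [S [bS vS]]] := L1 st hb hv hki.
rewrite -(Nb_upd f v k) (L2 st1.1 bS vS); have [_ hcard _] := bS; move: hcard; rewrite (cardsD1 v) vS; lia.
Qed.

Lemma Nb_sub f v k y : y \in Nb f v k -> adj v y /\ f y = k.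
Proof. by rewrite in_Nb => /andP [/eqP]. Qed.

Lemma final f i K v : (forall f' i' K' j', state f' -> bad f' i' K' -> j' != i' -> compl f' K' j') ->
  state f -> bad f i K -> v \in K -> exists S : {set T}, #|S| = D.+1 /\ clq S.
Proof.
move=> CE st hb hv.
have [hc hcard hcol] := hb.
set Nv := [set y | adj v y].
have cNv : #|Nv| = D.
  have e : #|Nv| = (\sum_k #|Nb f v k|)%N.
    rewrite /Nv card_set_sum (eq_bigr (fun k => \sum_y ((f y == k) && adj v y))%N); last first.
      by move=> k _; rewrite /Nb card_set_sum.
    rewrite exchange_big /=; apply eq_bigr => y _.
    rewrite (bigD1 (f y)) //= eqxx big1 ?addn0 // => k hk.
    by rewrite eq_sym (negbTE hk).
  rewrite e hD; apply eq_bigr => k _; exact: Nb_card st hb hv.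
have vNv : v \notin Nv by rewrite inE adjxx.
exists (v |: Nv); split; first by rewrite cardsU1 vNv cNv.
have same : forall k p q, p \in Nb f v k -> q \in Nb f v k -> p != q -> adj p q.
  move=> k p q hp hq hpq.
  case: (eqVneq k i) => [eki|hki].
    move: hp hq; rewrite eki (L2 st.1 hb hv) => /setD1P [_ hp] /setD1P [_ hq].
    exact: clqE hc hp hq hpq.
  have [st1 [S [bS vS]]] := L1 st hb hv hki.
  move: hp hq; rewrite -(Nb_upd f v k) (L2 st1.1 bS vS) => /setD1P [_ hp] /setD1P [_ hq].
  have [hcS _ _] := bS; exact: clqE hcS hp hq hpq.
have cross : forall p q, p \in Nb f v (f p) -> q \in Nb f v (f q) -> f p != f q -> adj p q.
  move=> p q hp hq hpq.
  have [avp _] := Nb_sub hp; have [avq _] := Nb_sub hq.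
  have pv : p != v by apply/negP => /eqP e; rewrite e adjxx in avp.
  have qv : q != v by apply/negP => /eqP e; rewrite e adjxx in avq.
  case: (eqVneq (f p) i) => [epi|hpi].
    have pK : p \in K by move: hp; rewrite epi (L2 st.1 hb hv) => /setD1P [].
    have hqi : f q != i by rewrite -epi eq_sym.
    rewrite adjC; exact: (CE _ _ _ _ st hb hqi v q p hv erefl avq pK pv).
  case: (eqVneq (f q) i) => [eqi|hqi].
    have qK : q \in K by move: hq; rewrite eqi (L2 st.1 hb hv) => /setD1P [].
    exact: (CE _ _ _ _ st hb hpi v p q hv erefl avp qK qv).
  have [st1 [S [bS vS]]] := L1 st hb hv hpi.
  have pS : p \in S by move: hp; rewrite -(Nb_upd f v (f p)) (L2 st1.1 bS vS) => /setD1P [].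
  have hqp : f q != f p by rewrite eq_sym.
  have fq : upd f v (f p) q = f q by rewrite upd_o.
  rewrite adjC; exact: (CE _ _ _ _ st1 bS hqp v q p vS fq avq pS pv).
apply/clqP => p q hp hq hpq; change (adj p q).
rewrite !in_setU1 !inE in hp hq.
case/orP: hp => [/eqP ep|avp]; case/orP: hq => [/eqP eq|avq].
- by rewrite ep eq eqxx in hpq.
- by rewrite ep.
- by rewrite eq adjC.
have hp : p \in Nb f v (f p) by rewrite in_Nb eqxx avp.
have hq : q \in Nb f v (f q) by rewrite in_Nb eqxx avq.
case: (eqVneq (f p) (f q)) => [e|ne].
  by apply: (same (f p)) => //; rewrite e.
exact: cross.
Qed.


Section Chain.
Local Close Scope ring_scope.
Variables (i j : col).
Hypothesis hji : j != i.

Definition a t := if odd t then j else i.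

Lemma a_neq t : a t.+1 != a t.
Proof. rewrite /a /=; case: (odd t) => //=; by rewrite eq_sym. Qed.

Lemma a_SS t : a t.+2 = a t.
Proof. by rewrite /a /= negbK. Qed.

Lemma a_other t s : a t != a s -> a t = a s.+1.
Proof. rewrite /a /=; by case: (odd t); case: (odd s); rewrite ?eqxx. Qed.

Record chain (psi : nat -> coloring) (K : nat -> {set T}) (x : nat -> T) (n : nat) : Prop := Chain {
  ch_st : forall t, t <= n -> state (psi t);
  ch_bad : forall t, t <= n -> bad (psi t) (a t) (K t);
  ch_anti : forall t, t <= n -> anti (psi t) (K t) (a t.+1);
  ch_x1 : forall t, t < n -> x t \in K t;
  ch_x2 : forall t, t < n -> x t \in K t.+1;
  ch_upd : forall t, t < n -> psi t.+1 = upd (psi t) (x t) (a t.+1);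
  ch_disj : forall r t y, t <= n -> r.+2 <= t -> y \in K r -> y \in K t -> False;
  ch_inter : forall t y, t < n -> y \in K t -> y \in K t.+1 -> y = x t;
  ch_xneq : forall t, 0 < t < n -> x t != x t.-1 }.

Lemma chain_colors psi K x n r t w : chain psi K x n -> r <= t -> t <= n ->
  (forall s, r <= s -> s < t -> w != x s) -> psi t w = psi r w.
Proof.
move=> ch; elim: t => [|t IH] hrt htn hs.
  by have -> : r = 0 by lia.
case: (eqVneq r t.+1) => [->//|hne].
have hrt' : r <= t by lia.
rewrite (ch_upd ch) // upd_o; last by apply: hs.
apply: IH => //; [lia | move=> s h1 h2; apply: hs; lia].
Qed.

Lemma chain_distinct psi K x n s t : chain psi K x n -> s < t -> t < n -> x s != x t.
Proof.
move=> ch hst htn.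
case: (eqVneq t s.+1) => [ets|hne].
  by rewrite ets eq_sym (_ : s = s.+1.-1) // (ch_xneq ch) //; lia.
apply/negP => /eqP e.
apply: (ch_disj ch (r := s) (t := t) (y := x s)); [lia|lia|apply: (ch_x1 ch); lia|].
by rewrite e (ch_x1 ch).
Qed.


Lemma card_pick (K : {set T}) y k : #|K| = (alpha k).+1 -> exists z, z \in K /\ z != y.
Proof.
move=> hc; have h := cardsD1 y K.
have : 0 < #|K :\ y| by move: h; rewrite hc; case: (y \in K) => /=; have := halpha k; lia.
by case/card_gt0P => z /setD1P [? ?]; exists z.
Qed.

Lemma chain_ext psi K x n : chain psi K x n -> exists psi' K' x', chain psi' K' x' n.+1.
Proof.
move=> ch.
have [hc_n hcard_n hcol_n] := ch_bad ch (leqnn n).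
have [xn [xnK xnne]] := card_pick (x n.-1) hcard_n.
have hne : a n.+1 != a n := a_neq n.
have [st1 [S [bS xnS]]] := L1 (ch_st ch (leqnn n)) (ch_bad ch (leqnn n)) xnK hne.
set psin1 := upd (psi n) xn (a n.+1) in st1 bS.
have [hcS hcardS hcolS] := bS.
have F_inter : forall y, y \in K n -> y \in S -> y = xn.
  move=> y hy hyS; apply/eqP; apply/negPn/negP => hyx.
  have := hcolS y hyS; rewrite /psin1 upd_o // (hcol_n y hy) => e.
  by move: hne; rewrite e eqxx.
have F_anti : anti psin1 S (a n.+2).
  rewrite a_SS.
  have hne' : a n != a n.+1 by rewrite eq_sym.
  case: (Dich st1 bS hne') => // hcomp; exfalso.
  have [z [zK zne]] := card_pick xn hcard_n.
  have [w [wS wne]] := card_pick xn hcardS.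
  have azw : adj z w.
    apply: (hcomp xn z w xnS _ _ wS wne).
      by rewrite /psin1 upd_o // hcol_n.
    by apply: clqE hc_n xnK zK _; rewrite eq_sym.
  have pw : psi n w = a n.+1 by rewrite -(hcolS w wS) /psin1 upd_o.
  have axw : adj xn w by apply: clqE hcS xnS wS _; rewrite eq_sym.
  have := antiE (ch_anti ch (leqnn n)) xnK pw axw zK zne.
  by rewrite adjC azw.
have A : forall y, 0 < n -> y \in K n.-1 -> y \in S -> y != x n.-1 -> False.
  move=> y hn hyK hyS hyx.
  have hp : n.-1 < n by nlia.
  have xpK : x n.-1 \in K n by have := ch_x2 ch hp; rewrite prednK.
  have yxn : y != xn.
    apply/negP => /eqP e; rewrite e in hyK.
    have := ch_inter ch hp hyK; rewrite prednK // => /(_ xnK) e2.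
    by rewrite e2 eqxx in xnne.
  have py : psi n y = a n.+1 by rewrite -(hcolS y hyS) /psin1 upd_o.
  have [hcp _ _] := ch_bad ch (ltnW hp).
  have axy : adj (x n.-1) y by apply: clqE hcp (ch_x1 ch hp) hyK _; rewrite eq_sym.
  have xnxp : xn != x n.-1 := xnne.
  have := antiE (ch_anti ch (leqnn n)) xpK py axy xnK xnxp.
  by rewrite (clqE hcS hyS xnS yxn).
have Bm : forall r y, r.+2 <= n -> y \in K r -> y \in S -> y != x r -> False.
  move=> r y hr hyK hyS hyx.
  have xnKr : xn \notin K r by apply/negP => h; apply: (ch_disj ch (leqnn n) hr h xnK).
  have unm : forall q, q \in K r -> q != x r -> psin1 q = a r.
    move=> q hq hqx.
    have qxn : q != xn by apply/negP => /eqP e; rewrite -e hq in xnKr.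
    have hrn : r <= n by nlia.
    have hs : forall s, r <= s -> s < n -> q != x s.
      move=> s h1 h2; case: (eqVneq s r) => [->//|hsr].
      case: (eqVneq s r.+1) => [esr|hsr1].
        apply/negP => /eqP e; subst s.
        have h1' : x r.+1 \in K r.+1 := ch_x1 ch h2.
        have hrn' : r < n by nlia.
        rewrite e in hq hqx.
        have e2 := ch_inter ch hrn' hq h1'.
        by rewrite e2 eqxx in hqx.
      apply/negP => /eqP e; rewrite e in hq.
      have hsn : s <= n by nlia.
      have hrs : r.+2 <= s by nlia.
      exact: (ch_disj ch hsn hrs hq (ch_x1 ch h2)).
    rewrite /psin1 upd_o // (chain_colors ch hrn (leqnn n) hs).
    exact: (bad_in (ch_bad ch hrn) hq).
  have ar : a r = a n.+1 by rewrite -(unm y hyK hyx) hcolS.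
  have pxn : psi r xn = a r.+1.
    rewrite -(chain_colors ch (r := r) (t := n) (w := xn)) //; last first.
      move=> s h1 h2; case: (eqVneq s.+1 n) => [esn|hsn].
        by have -> : s = n.-1 by rewrite -esn.
      apply/negP => /eqP e.
      apply: (ch_disj ch (r := s) (t := n) (y := xn)) => //; first by nlia.
      by rewrite e; apply: (ch_x1 ch).
      nlia.
    rewrite (hcol_n xn xnK); apply: a_other; by rewrite ar eq_sym.
  have yxn : y != xn by apply/negP => /eqP e; rewrite -e hyK in xnKr.
  have ayxn : adj y xn := clqE hcS hyS xnS yxn.
  have hrn0 : r <= n by nlia.
  have [hcr hcardr hcolr] := ch_bad ch hrn0.
  have sub : K r \subset [set x r; y].
    apply/subsetP => q hq; rewrite !inE.
    case: (eqVneq q (x r)) => //= hqx; case: (eqVneq q y) => //= hqy; exfalso.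
    have qS : q \in S.
      have := L2 st1.1 bS hyS => e.
      have : q \in Nb psin1 y (a n.+1) by rewrite in_Nb unm // ar eqxx /=; apply: clqE hcr hyK hq _; rewrite eq_sym.
      by rewrite e => /setD1P [].
    have qxn : q != xn by apply/negP => /eqP e; rewrite -e hq in xnKr.
    have := antiE (ch_anti ch hrn0) hyK pxn ayxn hq hqy.
    by rewrite adjC (clqE hcS qS xnS qxn).
  have := subset_leq_card sub; rewrite cards2 hcardr; have := halpha (a r); case: (x r != y); nlia.
have F_disj : forall r y, r.+2 <= n.+1 -> y \in K r -> y \in S -> False.
  move=> r y hr hyK hyS.
  case: (eqVneq y (x r)) => [eyx|nyx].
    have hyK1 : y \in K r.+1 by rewrite eyx; apply: (ch_x2 ch); nlia.
    case: (eqVneq r.+1 n) => [ern|hrn].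
      have := F_inter y; rewrite -ern => /(_ hyK1 hyS) e.
      by move: xnne; rewrite -e eyx -ern /= eqxx.
    have nyx1 : y != x r.+1 by rewrite eyx eq_sym (_ : r = r.+1.-1) // (ch_xneq ch) //; nlia.
    case: (eqVneq r.+2 n) => [ern2|hrn2].
      by apply: (A y); [nlia | rewrite -ern2 | | rewrite -ern2].
    by apply: (Bm r.+1 y) => //; nlia.
  case: (eqVneq r.+1 n) => [ern|hrn].
    by apply: (A y); [nlia | rewrite -ern | | rewrite -ern].
  by apply: (Bm r y) => //; nlia.
exists (fun t => if t == n.+1 then psin1 else psi t), (fun t => if t == n.+1 then S else K t),
  (fun t => if t == n then xn else x t).
constructor.
- move=> t ht /=; case: (eqVneq t n.+1) => [_|htn]; first exact: st1.
  by apply: (ch_st ch); nlia.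
- move=> t ht /=; case: (eqVneq t n.+1) => [->//|htn].
  by apply: (ch_bad ch); nlia.
- move=> t ht /=; case: (eqVneq t n.+1) => [->//|htn].
  by apply: (ch_anti ch); nlia.
- move=> t ht /=; rewrite (_ : (t == n.+1) = false); last by apply/eqP; nlia.
  case: (eqVneq t n) => [->//|htn]; by apply: (ch_x1 ch); nlia.
- move=> t ht /=; case: (eqVneq t n) => [->|htn]; first by rewrite eqxx.
  rewrite (_ : (t.+1 == n.+1) = false); last by apply/eqP; nlia.
  by apply: (ch_x2 ch); nlia.
- move=> t ht /=; case: (eqVneq t n) => [->|htn]; first by rewrite eqxx (_ : (n == n.+1) = false) //; nlia.
  rewrite (_ : (t.+1 == n.+1) = false); last by apply/eqP; nlia.
  rewrite (_ : (t == n.+1) = false); last by apply/eqP; nlia.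
  by apply: (ch_upd ch); nlia.
- move=> r t y ht hrt /=.
  rewrite (_ : (r == n.+1) = false); last by apply/eqP; nlia.
  case: (eqVneq t n.+1) => [et|htn]; first by subst t => hy hyS; apply: (F_disj r y hrt hy hyS).
  by apply: (ch_disj ch); nlia.
- move=> t y ht /=.
  rewrite (_ : (t == n.+1) = false); last by apply/eqP; nlia.
  case: (eqVneq t n) => [->|htn]; first by rewrite eqxx; apply: F_inter.
  rewrite (_ : (t.+1 == n.+1) = false); last by apply/eqP; nlia.
  by apply: (ch_inter ch); nlia.
- move=> t /andP [ht1 ht2] /=.
  case: (eqVneq t n) => [et|htn].
    subst t; rewrite (_ : (n.-1 == n) = false) //; apply/eqP; nlia.
  rewrite (_ : (t.-1 == n) = false); last by apply/eqP; nlia.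
  apply: (ch_xneq ch); apply/andP; split; nlia.
Qed.


Lemma chain_base f0 K0 y0 : state f0 -> bad f0 i K0 -> anti f0 K0 j ->
  chain (fun _ => f0) (fun _ => K0) (fun _ => y0) 0.
Proof.
move=> st hb ha; constructor => //.
- move=> t ht; have -> : t = 0 by nlia. by [].
- move=> t ht; have -> : t = 0 by nlia. by [].
- move=> r t y ht hrt; nlia.
- move=> t /andP [h1 h2]; nlia.
Qed.


Lemma anti_false f0 K0 (y0 : T) : state f0 -> bad f0 i K0 -> anti f0 K0 j -> False.
Proof.
move=> st hb ha.
have hall : forall n, exists psi K x, chain psi K x n.
  elim => [|n [psi [K [x ch]]]]; first by exists (fun _ => f0), (fun _ => K0), (fun _ => y0); apply: chain_base.
  exact: chain_ext ch.
have [psi [K [x ch]]] := hall #|T|.+1.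
have inj : injective (fun t : 'I_#|T|.+1 => x t).
  move=> s t /= e; apply/val_inj/eqP.
  case: (ltngtP s t) => h //.
    by have := chain_distinct ch h (ltn_ord t); rewrite e eqxx.
  by have := chain_distinct ch h (ltn_ord s); rewrite e eqxx.
by have := @leq_card _ _ _ inj; rewrite card_ord ltnn.
Qed.

End Chain.

Lemma some_elt (K : {set T}) k : #|K| = (alpha k).+1 -> exists y, y \in K.
Proof. by move=> h; apply/card_gt0P; rewrite h. Qed.

Lemma compl_all f i K j : state f -> bad f i K -> j != i -> compl f K j.
Proof.
move=> st hb hji.
case: (Dich st hb hji) => // ha; exfalso.
have [_ hcard _] := hb.
have [y0 _] := some_elt hcard.
have e : a i j 0 = i by [].
have e1 : a i j 1 = j by [].
rewrite -e in hb; rewrite -e1 in ha.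
exact: (anti_false hji y0 st hb ha).
Qed.

Lemma exists_state : exists f, state f.
Proof.
set g0 : coloring := [ffun => ord0].
have [f0 _ hf0] := @arg_minP _ _ _ g0 xpredT P2 isT.
have F0 : [forall g, P2 f0 <= P2 g] by apply/forallP => g; exact: hf0.
have [f1 hf1 hmin] := @arg_minnP _ f0 (fun f => [forall g, P2 f <= P2 g]) B F0.
exists f1; split.
  by move=> g; move/forallP: hf1 => /(_ g).
move=> g hg; apply: hmin; by apply/forallP.
Qed.

Lemma no_bad f i K : (forall S : {set T}, #|S| = D.+1 -> ~ is_clique m S) ->
  state f -> bad f i K -> False.
Proof.
move=> noK st hb.
have [_ hcard _] := hb.
have [v hv] := some_elt hcard.
have [S [hS hcS]] := final compl_all st hb hv.
by apply: (noK S hS); apply/clqP.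
Qed.

Lemma thm_sec : (forall K : {set T}, #|K| = D.+1 -> ~ is_clique m K) ->
  exists xi : T -> col,
    (forall psi : T -> col, (Phi m alpha xi <= Phi m alpha psi)%R) /\
    (forall (i : col) (K : {set T}),
        #|K| = (alpha i).+1 -> is_clique m K -> ~ (forall x, x \in K -> xi x = i)).
Proof.
move=> noK.
have [f st] := exists_state.
exists f; split.
  move=> psi; rewrite (@Phi_ext psi [ffun x => psi x]); last by move=> x; rewrite ffunE.
  rewrite !Phi_P2; have := st.1 [ffun x => psi x]; lra.
move=> i K hK hcl hcol.
apply: (no_bad noK st (i := i) (K := K)); split => //; exact/clqP.
Qed.

End Main.

Local Close Scope ring_scope.

Theorem theorem2 (T : finType) (m : T -> T -> nat) (D c : nat)
  (alpha : 'I_c.+1 -> nat) :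
  loopless_graph m ->
  (forall K : {set T}, #|K| = D.+1 -> ~ is_clique m K) ->
  (forall x : T, degree m x <= D) ->
  1 <= c ->
  D = \sum_(i < c.+1) alpha i ->
  (forall i, 2 <= alpha i) ->
  exists xi : T -> 'I_c.+1,
    (forall psi : T -> 'I_c.+1, (Phi m alpha xi <= Phi m alpha psi)%R) /\
    (forall (i : 'I_c.+1) (K : {set T}),
        #|K| = (alpha i).+1 -> is_clique m K -> ~ (forall x, x \in K -> xi x = i)).
Proof.
move=> [msym mloop] noK hdeg _ hD halpha.
by eapply thm_sec; eassumption.
Qed.
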